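(* Let $\mathfrak V$ be a vessel on $\Omega\subseteq\mathbb R$ with transfer function $S(\lambda,x)=I-C(x)\mathbb X^{-1}(x)(\lambda I-A)^{-1}B(x)\sigma_1$. Fix $\lambda$ not in the spectrum of $A$, and let $u(\lambda,x)\in\mathbb C^2$ be a differentiable solution (in $x$) of $\lambda\sigma_2u-\sigma_1\partial_xu+\gamma u=0$. Then $y(\lambda,x)=S(\lambda,x)u(\lambda,x)$ satisfies $\lambda\sigma_2y-\sigma_1\partial_xy+\gamma_*(x)y=0$ for $x\in\Omega$.
   Context: A Krein space $\mathcal K$ is a Hilbert space with an extra continuous Hermitian (possibly indefinite) sesquilinear form; adjoints are taken with respect to it. Fix $2\times2$ matrices $\sigma_1$ (invertible, $\sigma_1=\sigma_1^*$), $\sigma_2=\sigma_2^*$, $\gamma=-\gamma^*$. A node $(C,A_\zeta,\mathbb X,A,B;\sigma_1)$: bounded $C:\mathcal K\to\mathbb C^2$, $\mathbb X:\mathcal K\to\mathcal K$, $B:\mathbb C^2\to\mathcal K$, and generators $A,A_\zeta$ of strongly continuous groups with common dense domain $D(A)=D(A_\zeta)$, such that $\mathbb X(D(A))\subseteq D(A)$ and $A\mathbb Xu+\mathbb XA_\zeta u+B\sigma_1Cu=0$ for $u\in D(A)$; invertible if $\mathbb X$ is boundedly invertible and $\mathbb X^{-1}(D(A))\subseteq D(A)$. A prevessel consists of fixed $A,A_\zeta$ and bounded operators $C(x),\mathbb X(x),B(x)$, differentiable in $x\in\mathbb R$, such that for each $x$ the tuple is a node, $B(x)\sigma_2e\in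 D(A)$ for all $e\in\mathbb C^2$, and $\partial_xB=-(AB\sigma_2+B\gamma)\sigma_1^{-1}$, $\partial_xCu=\sigma_1^{-1}(-\sigma_2CA_\zeta u+\gamma Cu)$ ($u\in D(A)$), $\partial_x\mathbb X=B\sigma_2C$. A vessel on $\Omega\subseteq\mathbb R$ is a prevessel such that for each $x\in\Omega$, $\mathbb X(x)$ is invertible and the node at $x$ is invertible, together with $\gamma_*(x)=\gamma+\sigma_2C\mathbb X^{-1}B\sigma_1-\sigma_1C\mathbb X^{-1}B\sigma_2$ on $\Omega$ (linkage condition). *)

(* Defs.v *)
From HB Require Import structures.
From mathcomp Require Import all_boot all_order all_algebra.
From mathcomp Require Import all_classical all_reals all_analysis.
From mathcomp Require Import complex.
Import Order.TTheory GRing.Theory Num.Theory.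
Import numFieldTopology.Exports numFieldNormedType.Exports.

Set Implicit Arguments.
Unset Strict Implicit.
Unset Printing Implicit Defensive.

Local Open Scope classical_set_scope.
Local Open Scope ring_scope.
Local Open Scope complex_scope.

Definition cplx (R : realType) : numClosedFieldType := R[i].

Section Defs.
Variable R : realType.
Local Notation C := (cplx R).

Definition mxstar m n (M : 'M[C]_(m, n)) : 'M[C]_(n, m) := (map_mx Num.conj M)^T.

Definition mx_of (f : 'cV[C]_2 -> 'cV[C]_2) : 'M[C]_2 :=
  \matrix_(i < 2, j < 2) f (delta_mx j 0) i 0.

Definition is_linear (U V : lmodType C) (f : U -> V) : Prop :=
  forall (a : C) (u v : U), f (a *: u + v) = a *: f u + f v.

(* bounded (= continuous linear) operator *)
Definition bounded_op (U V : normedModType C) (f : U -> V) : Prop :=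
  is_linear f /\ continuous f.

(* Hilbert space inner product inducing the norm, plus a continuous
   Hermitian sesquilinear (Krein) form *)
Definition krein_space (K : completeNormedModType C) (ip kf : K -> K -> C) : Prop :=
  (forall (a : C) u v w, ip (a *: u + v) w = a * ip u w + ip v w) /\
  (forall u w, ip u w = Num.conj (ip w u)) /\
  (forall u, `|u| ^+ 2 = ip u u) /\
  (forall (a : C) u v w, kf (a *: u + v) w = a * kf u w + kf v w) /\
  (forall u w, kf u w = Num.conj (kf w u)) /\
  continuous (fun p : K * K => kf p.1 p.2).

Section Ops.
Variable K : normedModType C.

Definition sc_group (T : R -> K -> K) : Prop :=
  (forall t, bounded_op (T t)) /\
  (forall u, T 0 u = u) /\
  (forall s t u, T (s + t) u = T s (T t u)) /\
  (forall u, continuous (fun t : R => T t u)).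

Definition generator_of (T : R -> K -> K) (D : set K) (A : K -> K) : Prop :=
  sc_group T /\
  (forall u, D u <-> exists v : K,
       (fun h : R => (h%:C)^-1 *: (T h u - u)) @ (0 : R)^' --> v) /\
  (forall u, D u -> (fun h : R => (h%:C)^-1 *: (T h u - u)) @ (0 : R)^' --> A u).

Definition is_generator (D : set K) (A : K -> K) : Prop :=
  exists T, generator_of T D A.

(* Rl = (lam I - A)^{-1}, the resolvent: lam is not in the spectrum of A *)
Definition resolvent (D : set K) (A : K -> K) (lam : C) (Rl : K -> K) : Prop :=
  bounded_op Rl /\
  (forall v, D (Rl v) /\ lam *: Rl v - A (Rl v) = v) /\
  (forall w, D w -> Rl (lam *: w - A w) = w).

Definition vderiv (V : normedModType C) (f : R -> V) (x : R) (v : V) : Prop :=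
  (fun h : R => (h%:C)^-1 *: (f (x + h) - f x)) @ (0 : R)^' --> v.

Definition op_deriv (U V : normedModType C) (F : R -> U -> V) (x : R) (F' : U -> V) : Prop :=
  bounded_op F' /\
  forall eps : R, 0 < eps -> \forall h \near (0 : R)^', forall u : U,
      `|(h%:C)^-1 *: (F (x + h) u - F x u) - F' u| <= eps%:C * `|u|.

Definition node (D : set K) (A Az : K -> K) (Cop : K -> 'cV[C]_2) (X : K -> K)
    (B : 'cV[C]_2 -> K) (s1 : 'M[C]_2) : Prop :=
  bounded_op Cop /\ bounded_op X /\ bounded_op B /\
  is_generator D A /\ is_generator D Az /\ closure D = setT /\
  (forall u, D u -> D (X u)) /\
  (forall u, D u -> A (X u) + X (Az u) + B (s1 *m Cop u) = 0).

Definition node_invertible (D : set K) (X : K -> K) : Prop :=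
  exists Xi : K -> K, bounded_op Xi /\ (forall v, X (Xi v) = v) /\
    (forall v, Xi (X v) = v) /\ (forall u, D u -> D (Xi u)).

Definition prevessel (D : set K) (A Az : K -> K) (Cop : R -> K -> 'cV[C]_2)
    (X : R -> K -> K) (B : R -> 'cV[C]_2 -> K) (s1 s2 gam : 'M[C]_2) : Prop :=
  forall x : R,
    node D A Az (Cop x) (X x) (B x) s1 /\
    (forall e, D (B x (s2 *m e))) /\
    (exists B', op_deriv B x B' /\
       forall e, B' e = - (A (B x (s2 *m (invmx s1 *m e))) + B x (gam *m (invmx s1 *m e)))) /\
    (exists C', op_deriv Cop x C' /\
       forall u, D u -> C' u = invmx s1 *m (- (s2 *m Cop x (Az u)) + gam *m Cop x u)) /\
    (exists X', op_deriv X x X' /\ forall u, X' u = B x (s2 *m Cop x u)).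

Definition vessel (Omega : set R) (D : set K) (A Az : K -> K) (Cop : R -> K -> 'cV[C]_2)
    (X : R -> K -> K) (B : R -> 'cV[C]_2 -> K) (s1 s2 gam : 'M[C]_2) : Prop :=
  prevessel D A Az Cop X B s1 s2 gam /\
  forall x, Omega x -> node_invertible D (X x).

(* gamma_*(x) = gam + s2 C X^{-1} B s1 - s1 C X^{-1} B s2, with Xi x = X(x)^{-1} *)
Definition gamma_star (Cop : R -> K -> 'cV[C]_2) (Xi : R -> K -> K)
    (B : R -> 'cV[C]_2 -> K) (s1 s2 gam : 'M[C]_2) (x : R) : 'M[C]_2 :=
  gam + mx_of (fun e => s2 *m Cop x (Xi x (B x (s1 *m e))))
      - mx_of (fun e => s1 *m Cop x (Xi x (B x (s2 *m e)))).

(* transfer function S(lam, x) = I - C(x) X(x)^{-1} (lam I - A)^{-1} B(x) s1,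
   with Rl = (lam I - A)^{-1} *)
Definition transfer (Cop : R -> K -> 'cV[C]_2) (Xi : R -> K -> K) (Rl : K -> K)
    (B : R -> 'cV[C]_2 -> K) (s1 : 'M[C]_2) (x : R) (e : 'cV[C]_2) : 'cV[C]_2 :=
  e - Cop x (Xi x (Rl (B x (s1 *m e)))).

End Ops.

Definition sigma_data (s1 s2 gam : 'M[C]_2) : Prop :=
  s1 \in unitmx /\ s1 = mxstar s1 /\ s2 = mxstar s2 /\ gam = - mxstar gam.

End Defs.

(* Main.v *)
Require Import Defs.
From HB Require Import structures.
From mathcomp Require Import all_boot all_order all_algebra.
From mathcomp Require Import all_classical all_reals all_analysis.
From mathcomp Require Import complex.
Import Order.TTheory GRing.Theory Num.Theory.
Import numFieldTopology.Exports numFieldNormedType.Exports.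
Local Open Scope classical_set_scope.
Local Open Scope ring_scope.
From mathcomp Require Import ring lra.
Set Implicit Arguments. Unset Strict Implicit. Unset Printing Implicit Defensive.
Local Open Scope complex_scope.
Section Found.
Variable R : realType.
Local Notation C := (cplx R).

Definition NN (V : normedModType C) (v : V) : R := complex.Re `|v|.

Lemma C_ge0E (z : C) : 0 <= z -> z = (complex.Re z)%:C.
Proof.
move=> hz; rewrite [LHS]complexE.
move: hz; rewrite lecE => /andP[/eqP H _].
have H0 : complex.Im (0:C) = 0 by [].
by rewrite H H0 mulr0 addr0.
Qed.

Lemma normE (V : normedModType C) (v : V) : `|v| = (NN v)%:C.
Proof. exact/C_ge0E/normr_ge0. Qed.

Lemma NN_ge0 (V : normedModType C) (v : V) : 0 <= NN v.
Proof. by rewrite -lecR -normE normr_ge0. Qed.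

Lemma NN_add (V : normedModType C) (v w : V) : NN (v + w) <= NN v + NN w.
Proof. by rewrite -lecR rmorphD /= -!normE ler_normD. Qed.

Lemma NN_opp (V : normedModType C) (v : V) : NN (- v) = NN v.
Proof. by rewrite /NN normrN. Qed.

Lemma NN0 (V : normedModType C) : NN (0 : V) = 0.
Proof. by rewrite /NN normr0. Qed.

Lemma NN_eq0 (V : normedModType C) (v : V) : NN v = 0 -> v = 0.
Proof. by move=> h; apply/normr0_eq0; rewrite normE h. Qed.

Lemma normRC (h : R) : `|h%:C| = `|h|%:C :> C.
Proof.
rewrite normc_def /= expr0n /= addr0 sqrtr_sqr //.
Qed.

Lemma NN_scale (V : normedModType C) (a : C) (v : V) :
  NN (a *: v) = complex.Re `|a| * NN v.
Proof.
by rewrite /NN normrZ (C_ge0E (normr_ge0 a)) (normE v) -rmorphM /=.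
Qed.

Lemma NN_scaleR (V : normedModType C) (h : R) (v : V) :
  NN (h%:C *: v) = `|h| * NN v.
Proof. by rewrite NN_scale normRC. Qed.

Lemma NN_scaleRV (V : normedModType C) (h : R) (v : V) :
  NN ((h%:C)^-1 *: v) = `|h|^-1 * NN v.
Proof. by rewrite NN_scale normfV normRC -fmorphV. Qed.

Lemma cvgNN {T} {F : set_system T} {FF : Filter F} (V : normedModType C)
  (f : T -> V) (y : V) :
  f @ F --> y <-> forall e : R, 0 < e -> \forall t \near F, NN (y - f t) <= e.
Proof.
rewrite cvgrPdist_le; split.
  move=> H e e0; have := H e%:C; rewrite ltcR => /(_ e0).
  by apply: filterS => t; rewrite normE lecR.
move=> H eps eps0.
have E := C_ge0E (ltW eps0).
have e0 : 0 < complex.Re eps by rewrite -ltcR -E.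
have := H _ e0; apply: filterS => t; by rewrite E normE lecR.
Qed.
End Found.
Section Lin.
Variable R : realType.
Local Notation C := (cplx R).
Variables (U V : normedModType C).
Implicit Type f : U -> V.

Lemma lin0 f : is_linear f -> f 0 = 0.
Proof.
move=> H; have := H 1 0 0; rewrite !scale1r addr0 => /(congr1 (fun z => z - f 0)).
by rewrite addrK subrr => <-.
Qed.

Lemma linZ f : is_linear f -> forall a v, f (a *: v) = a *: f v.
Proof. by move=> H a v; have := H a v 0; rewrite !addr0 lin0 // addr0. Qed.

Lemma linD f : is_linear f -> forall v w, f (v + w) = f v + f w.
Proof. by move=> H v w; have := H 1 v w; rewrite !scale1r. Qed.

Lemma linN f : is_linear f -> forall v, f (- v) = - f v.
Proof. by move=> H v; rewrite -scaleN1r linZ // scaleN1r. Qed.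

Lemma linB f : is_linear f -> forall v w, f (v - w) = f v - f w.
Proof. by move=> H v w; rewrite linD // linN. Qed.

Lemma bounded_bound f : bounded_op f ->
  exists M : R, 0 < M /\ forall w, NN (f w) <= M * NN w.
Proof.
move=> [lin cont].
have := cont 0; rewrite /continuous_at => /cvgNN /(_ 1 ltr01).
rewrite lin0 // => /nbhs_norm0P [d /= d0 Hd].
have E := C_ge0E (ltW d0).
have del0 : 0 < complex.Re d by rewrite -ltcR -E.
set del := complex.Re d in del0 E.
exists (2 / del); split; first by rewrite divr_gt0.
move=> w.
have [n0|n0] := eqVneq (NN w) 0.
  by rewrite (NN_eq0 n0) lin0 // !NN0 mulr0.
have np : 0 < NN w by rewrite lt_neqAle eq_sym n0 NN_ge0.
set c := del / (2 * NN w).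
have c0 : 0 < c by rewrite divr_gt0 // mulr_gt0.
have HH : NN (f (c%:C *: w)) <= 1.
  have := Hd (c%:C *: w); rewrite /= sub0r NN_opp; apply.
  rewrite E normE ltcR NN_scaleR (gtr0_norm c0).
  have -> : c * NN w = del / 2 by rewrite /c; field; rewrite lt0r_neq0.
  by rewrite ltr_pdivrMr // ltr_pMr // ltr1n.
move: HH; rewrite linZ // NN_scaleR (gtr0_norm c0) => HH.
have -> : 2 / del * NN w = c^-1 by rewrite /c; field; rewrite !lt0r_neq0.
by rewrite -ler_pdivlMl // mulr1 in HH.
Qed.
End Lin.
Section Deriv.
Variable R : realType.
Local Notation C := (cplx R).
Local Open Scope complex_scope.

Definition dq (V : normedModType C) (f : R -> V) (x h : R) : V :=
  (h%:C)^-1 *: (f (x + h) - f x).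

Lemma near_neq0 : \forall h \near (0:R)^', h != 0.
Proof. exact: nbhs_dnbhs_neq. Qed.

Lemma near_small (e : R) : 0 < e -> \forall h \near (0:R)^', `|h| <= e.
Proof.
exact: dnbhs0_le. Qed.

Lemma vderivP (V : normedModType C) (f : R -> V) x v :
  vderiv f x v <-> forall e : R, 0 < e -> \forall h \near (0:R)^', NN (v - dq f x h) <= e.
Proof. exact: cvgNN. Qed.

Lemma vderivK (V : normedModType C) (f : R -> V) x v (K0 : R) : 0 < K0 ->
  (forall e : R, 0 < e -> \forall h \near (0:R)^', NN (v - dq f x h) <= e * K0) ->
  vderiv f x v.
Proof.
move=> K00 H; apply/vderivP => e e0.
have := H (e / K0) (divr_gt0 e0 K00); apply: filterS => h.
by rewrite divfK // lt0r_neq0.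
Qed.

Lemma dq_scale (V : normedModType C) (f : R -> V) x h : h != 0 ->
  f (x + h) - f x = h%:C *: dq f x h.
Proof.
move=> h0; rewrite /dq scalerA divff ?scale1r //.
by apply: contra h0 => /eqP H; apply/eqP; apply: complexI; rewrite H.  Qed.

End Deriv.
Section Deriv2.
Variable R : realType.
Local Notation C := (cplx R).
Local Open Scope complex_scope.
Variables (U V : normedModType C).

Lemma zid1 (W : zmodType) (a b A c d : W) :
  a + b - (A + c) = (a - c) - (A - d) - (d - b).
Proof.
rewrite -[RHS]addrA -opprD [X in _ = _ - X]addrA subrK.
by rewrite opprB [RHS]addrAC opprD !addrA.
Qed.

Lemma vderiv_lin (f : U -> V) (g : R -> U) x v : is_linear f -> continuous f ->
  vderiv g x v -> vderiv (fun t => f (g t)) x (f v).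
Proof.
move=> lf cf dg.
have E : (fun h : R => (h%:C)^-1 *: (f (g (x + h)) - f (g x))) =
   f \o (fun h : R => (h%:C)^-1 *: (g (x + h) - g x)).
  by apply/funext => h /=; rewrite (linZ lf) (linB lf).
have H := continuous_cvg _ (cf v) dg; rewrite -E in H; exact: H.
Qed.

Lemma vderivB (f g : R -> V) x a b : vderiv f x a -> vderiv g x b ->
  vderiv (fun t => f t - g t) x (a - b).
Proof.
move=> df dg.
have E : (fun h : R => (h%:C)^-1 *: ((f (x + h) - g (x + h)) - (f x - g x))) =
   (fun h : R => (h%:C)^-1 *: (f (x + h) - f x)) - (fun h : R => (h%:C)^-1 *: (g (x + h) - g x)).
  apply/funext => h; rewrite [RHS]/GRing.add /= -scalerBr; congr (_ *: _).
  by rewrite !opprD !opprK addrACA.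
have H := cvgB df dg; rewrite -E in H; exact: H.
Qed.

Lemma NN_le3 (W : normedModType C) (a b c : W) : NN (a - b - c) <= NN a + NN b + NN c.
Proof.
apply: le_trans (NN_add _ _) _; rewrite NN_opp lerD2r.
by apply: le_trans (NN_add _ _) _; rewrite NN_opp.
Qed.

Lemma NN_sym (W : normedModType C) (a b : W) : NN (a - b) = NN (b - a).
Proof. by rewrite -NN_opp opprB. Qed.

Lemma NN_dq_le (W : normedModType C) (v q : W) : NN q <= NN v + NN (v - q).
Proof.
have -> : q = v - (v - q) by rewrite subKr.
by apply: le_trans (NN_add _ _) _; rewrite NN_opp subKr.
Qed.

Lemma opderivP (F : R -> U -> V) x F' : op_deriv F x F' ->
  forall e : R, 0 < e -> \forall h \near (0:R)^', forall u,
    NN ((h%:C)^-1 *: (F (x + h) u - F x u) - F' u) <= e * NN u.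
Proof.
move=> [_ H] e e0; apply: filterS (H e e0) => h Hh u.
by rewrite -lecR rmorphM /= -!normE Hh.
Qed.

Lemma vderiv_op (F : R -> U -> V) F' (f : R -> U) x v :
  op_deriv F x F' -> bounded_op (F x) -> vderiv f x v ->
  vderiv (fun t => F t (f t)) x (F x v + F' (f x)).
Proof.
move=> dF bFx df.
have bF' := dF.1.
have [M1 [M10 HM1]] := bounded_bound bF'.
have [M0 [M00 HM0]] := bounded_bound bFx.
have [linF' _] := bF'; have [linFx _] := bFx.
set K0 := NN (f x) + NN v + 1 + M1 * (NN v + 1) + M0.
have K00 : 0 < K0.
  have := NN_ge0 (f x); have := NN_ge0 v; rewrite /K0; nra.
apply: (vderivK K00) => e e0.
have dFe := opderivP dF e0.
have /vderivP dfp := df.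
near=> h.
have h0 : h != 0 by near: h; exact: near_neq0.
have he : `|h| <= e by near: h; exact: near_small.
have h1 : `|h| <= 1 by near: h; exact: near_small.
have d1 : NN (v - dq f x h) <= 1 by near: h; exact: dfp.
have de : NN (v - dq f x h) <= e by near: h; exact: dfp.
have hF : forall u, NN ((h%:C)^-1 *: (F (x + h) u - F x u) - F' u) <= e * NN u.
  by near: h.
set w := f (x + h).
have Ew : w - f x = h%:C *: dq f x h by apply: dq_scale.
have E1 : dq (fun t => F t (f t)) x h =
    (h%:C)^-1 *: (F (x + h) w - F x w) + F x (dq f x h).
  rewrite /dq -/w (linZ linFx) (linB linFx) -scalerDr; congr (_ *: _).
  by rewrite addrA subrK.
rewrite E1 (zid1 _ _ _ _ (F' w)) -(linB linFx) -(linB linF').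
have Hq : NN (dq f x h) <= NN v + 1.
  by apply: le_trans (NN_dq_le v _) _; rewrite lerD2l.
have Hw1 : NN (w - f x) <= `|h| * (NN v + 1).
  by rewrite Ew NN_scaleR ler_wpM2l.
have Hw : NN w <= NN (f x) + NN v + 1.
  have -> : w = f x + (w - f x) by rewrite addrC subrK.
  apply: le_trans (NN_add _ _) _; rewrite -addrA lerD2l.
  apply: le_trans Hw1 _; rewrite -[X in _ <= X]mul1r ler_wpM2r //.
  by apply: addr_ge0 => //; exact: NN_ge0.
apply: le_trans (NN_le3 _ _ _) _.
have T1 := HM0 (v - dq f x h).
have T2 := hF w.
have T3 := HM1 (w - f x).
have P1 := NN_ge0 (v - dq f x h).
have P2 := NN_ge0 w.
have P3 := NN_ge0 (w - f x).
have P4 := NN_ge0 v.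
have P5 := NN_ge0 (f x).
have P6 := normr_ge0 h.
have B1 : M0 * NN (v - dq f x h) <= M0 * e by rewrite ler_wpM2l // ltW.
have B2 : e * NN w <= e * (NN (f x) + NN v + 1) by rewrite ler_wpM2l // ltW.
have B3 : M1 * NN (w - f x) <= M1 * (`|h| * (NN v + 1)) by rewrite ler_wpM2l // ltW.
have B4 : M1 * (`|h| * (NN v + 1)) <= M1 * (e * (NN v + 1)).
  have nv : 0 <= NN v + 1 by lra.
  exact: (ler_wpM2l (ltW M10) (ler_wpM2r nv he)).
have -> : e * K0 = e * (NN (f x) + NN v + 1) + M1 * (e * (NN v + 1)) + M0 * e.
  by rewrite /K0; ring.
lra.
Unshelve. all: by end_near.
Qed.

End Deriv2.
Section Deriv3.
Variable R : realType.
Local Notation C := (cplx R).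
Local Open Scope complex_scope.
Variables (U : normedModType C).

Lemma hK (W : normedModType C) (h : R) (z : W) : h != 0 ->
  h%:C *: ((h%:C)^-1 *: z) = z.
Proof.
move=> h0; rewrite scalerA divff ?scale1r //.
by apply: contra h0 => /eqP H; apply/eqP; apply: complexI; rewrite H.
Qed.

Lemma zid3 (W : zmodType) (v' dqv Q Xw Xx : W) :
  v' - Xx - (dqv - Q) = (v' - dqv) + (Q - Xw) + (Xw - Xx).
Proof.
rewrite -[RHS]addrA [X in _ = _ + X]addrA subrK opprB.
by rewrite addrACA [RHS]addrACA [- Xx + _]addrC.
Qed.

Lemma NN_add3 (W : normedModType C) (a b c : W) : NN (a + b + c) <= NN a + NN b + NN c.
Proof.
apply: le_trans (NN_add _ _) _; rewrite lerD2r.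
exact: NN_add.
Qed.

Lemma vderiv_inv (Xo : R -> U -> U) X' (Xi : R -> U -> U) (v : R -> U) x v' :
  op_deriv Xo x X' -> bounded_op (Xi x) ->
  (\forall h \near (0:R)^', forall w, Xo (x + h) (Xi (x + h) w) = w) ->
  (forall w, Xo x (Xi x w) = w) ->
  (forall w, Xi x (Xo x w) = w) ->
  vderiv v x v' ->
  vderiv (fun t => Xi t (v t)) x (Xi x (v' - X' (Xi x (v x)))).
Proof.
move=> dX bT hinv inv1 inv2 dv.
have bX' := dX.1.
have [MX [MX0 HMX]] := bounded_bound bX'.
have [MT [MT0 HMT]] := bounded_bound bT.
have [linX' _] := bX'; have [linT _] := bT.
set wx := Xi x (v x).
set W := 2 * (NN wx + MT * (NN v' + 1)).
set K1 := MT * (NN v' + 1 + (MX + 1) * W).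
set K0 := MT * (1 + W + MX * K1).
have PW : 0 <= W.
  rewrite /W; apply: mulr_ge0 => //; apply: addr_ge0; first exact: NN_ge0.
  apply: mulr_ge0; first exact: ltW.
  have := NN_ge0 v'; lra.
have PK1 : 0 < K1.
  rewrite /K1; apply: mulr_gt0 => //.
  have : 0 <= (MX + 1) * W by apply: mulr_ge0 => //; lra.
  have := NN_ge0 v'; lra.
have K00 : 0 < K0.
  rewrite /K0; apply: mulr_gt0 => //; have := mulr_gt0 MX0 PK1; lra.
apply: (vderivK K00) => e e0.
have dX1 := opderivP dX ltr01.
have dXe := opderivP dX e0.
have /vderivP dvp := dv.
set del := (2 * MT * (MX + 1))^-1.
have del0 : 0 < del by rewrite /del invr_gt0; nra.
near=> h.
have h0 : h != 0 by near: h; exact: near_neq0.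
have he : `|h| <= e by near: h; exact: near_small.
have h1 : `|h| <= 1 by near: h; exact: near_small.
have hd : `|h| <= del by near: h; exact: near_small.
have d1 : NN (v' - dq v x h) <= 1 by near: h; exact: dvp.
have de : NN (v' - dq v x h) <= e by near: h; exact: dvp.
have hX1 : forall u, NN ((h%:C)^-1 *: (Xo (x + h) u - Xo x u) - X' u) <= 1 * NN u.
  by near: h.
have hXe : forall u, NN ((h%:C)^-1 *: (Xo (x + h) u - Xo x u) - X' u) <= e * NN u.
  by near: h.
have hI : forall w, Xo (x + h) (Xi (x + h) w) = w by near: h.
set wh := Xi (x + h) (v (x + h)).
set Q := (h%:C)^-1 *: (Xo (x + h) wh - Xo x wh).
have Ediff : wh - wx = Xi x ((v (x + h) - v x) - (Xo (x + h) wh - Xo x wh)).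
  have E2 : (v (x + h) - v x) - (Xo (x + h) wh - Xo x wh) = Xo x wh - Xo x wx.
    rewrite /wh hI -/wh /wx inv1.
    by rewrite opprB addrC addrA subrK.
  by rewrite E2 (linB linT) !inv2.
have Edq : dq (fun t => Xi t (v t)) x h = Xi x (dq v x h - Q).
  by rewrite /dq -/wh -/wx Ediff -(linZ linT) scalerBr.
rewrite Edq -(linB linT) (zid3 _ _ _ (X' wh)) -(linB linX').
have Hq : NN (dq v x h) <= NN v' + 1.
  by apply: le_trans (NN_dq_le v' _) _; rewrite lerD2l.
have HQ : NN Q <= (MX + 1) * NN wh.
  have := NN_dq_le (X' wh) Q; rewrite (NN_sym (X' wh)).
  have := hX1 wh; rewrite -/Q; have := HMX wh; have := NN_ge0 wh; nra.
have Hd1 : NN (wh - wx) <= MT * (`|h| * (NN v' + 1) + `|h| * ((MX + 1) * NN wh)).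
  rewrite Ediff; apply: le_trans (HMT _) _; apply: ler_wpM2l; first exact: ltW.
  rewrite (dq_scale v x h0) -[X in _ - X](hK _ h0) -/Q -scalerBr NN_scaleR.
  rewrite -mulrDr; apply: ler_wpM2l; first exact: normr_ge0.
  apply: le_trans (NN_add _ _) _; rewrite NN_opp; exact: lerD.
have Hwh : NN wh <= W.
  have T0 : NN wh <= NN wx + NN (wh - wx).
    by have := NN_dq_le wx wh; rewrite (NN_sym wx).
  have A0 : `|h| * (2 * MT * (MX + 1)) <= 1.
    by rewrite -ler_pdivlMr ?mul1r //; nra.
  have A1 : MT * `|h| * (MX + 1) <= 1 / 2.
    have -> : MT * `|h| * (MX + 1) = (`|h| * (2 * MT * (MX + 1))) / 2 by field.
    lra.
  have E : MT * (`|h| * (NN v' + 1) + `|h| * ((MX + 1) * NN wh)) =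
     MT * `|h| * (NN v' + 1) + (MT * `|h| * (MX + 1)) * NN wh by ring.
  rewrite E in Hd1.
  have P1 : MT * `|h| * (NN v' + 1) <= MT * (NN v' + 1).
    apply: ler_wpM2r; first by have := NN_ge0 v'; lra.
    by rewrite -[X in _ <= X]mulr1; apply: ler_wpM2l => //; exact: ltW.
  have P2 : (MT * `|h| * (MX + 1)) * NN wh <= 1 / 2 * NN wh.
    by apply: ler_wpM2r => //; exact: NN_ge0.
  rewrite /W; lra.
have Hd2 : NN (wh - wx) <= e * K1.
  apply: le_trans Hd1 _.
  have -> : MT * (`|h| * (NN v' + 1) + `|h| * ((MX + 1) * NN wh)) =
     MT * (`|h| * (NN v' + 1 + (MX + 1) * NN wh)) by ring.
  have -> : e * K1 = MT * (e * (NN v' + 1 + (MX + 1) * W)) by rewrite /K1; ring.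
  apply: ler_wpM2l; first exact: ltW.
  apply: ler_pM => //.
    have := NN_ge0 v'; have : 0 <= (MX + 1) * NN wh.
      by apply: mulr_ge0; [lra | exact: NN_ge0].
    lra.
  rewrite lerD2l; apply: ler_wpM2l => //; lra.
apply: le_trans (HMT _) _.
have S1 := NN_add3 (v' - dq v x h) (Q - X' wh) (X' (wh - wx)).
have S2 : NN (Q - X' wh) <= e * W.
  have := hXe wh; rewrite -/Q => H; apply: le_trans H _.
  by apply: ler_wpM2l => //; exact: ltW.
have S3 := HMX (wh - wx).
have S4 : MX * NN (wh - wx) <= MX * (e * K1) by apply: ler_wpM2l; [exact: ltW|].
have -> : e * K0 = MT * (e * 1 + e * W + MX * (e * K1)) by rewrite /K0; ring.
apply: ler_wpM2l; first exact: ltW.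
lra.
Unshelve. all: by end_near.
Qed.
End Deriv3.
Section Mx.
Variable R : realType.
Local Notation C := (cplx R).

Lemma mulmx_cont (s : 'M[C]_2) : continuous (fun e : 'cV[C]_2 => s *m e).
Proof.
have E : (fun e : 'cV[C]_2 => s *m e) =
   (fun e : 'cV[C]_2 => e ord0 ord0 *: col ord0 s) + (fun e => e (lift ord0 ord0) ord0 *: col (lift ord0 ord0) s).
  apply/funext => e; rewrite [RHS]/GRing.add /=; apply/matrixP => i j; rewrite !mxE.
  rewrite !big_ord_recl big_ord0 (ord1 j) addr0.
  by congr (_ + _); apply: mulrC.
move=> v; rewrite E; apply: continuousD; apply: continuousZr_tmp; exact: coord_continuous.
Qed.

Lemma mulmx_lin (s : 'M[C]_2) : is_linear (fun e : 'cV[C]_2 => s *m e).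
Proof. by move=> a u v; rewrite mulmxDr scalemxAr. Qed.

Lemma mulmx_bounded (s : 'M[C]_2) : bounded_op (fun e : 'cV[C]_2 => s *m e).
Proof. split; [exact: mulmx_lin | exact: mulmx_cont]. Qed.

Lemma mx_ofE (f : 'cV[C]_2 -> 'cV[C]_2) : is_linear f -> forall e, mx_of f *m e = f e.
Proof.
move=> lf e.
rewrite [in RHS](matrix_sum_delta e) !big_ord_recl !big_ord0 !addr0.
rewrite !(linD lf) !(linZ lf).
apply/matrixP => i j; rewrite !mxE !big_ord_recl big_ord0 addr0 (ord1 j).
rewrite /mx_of !mxE.
by congr (_ + _); apply: mulrC.
Qed.
End Mx.
Section Comp.
Variable R : realType.
Local Notation C := (cplx R).
Lemma lin_comp (U V W : normedModType C) (f : V -> W) (g : U -> V) :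
  is_linear f -> is_linear g -> is_linear (fun e => f (g e)).
Proof. by move=> lf lg a u v; rewrite lg lf. Qed.
End Comp.
Lemma zsolve (W : zmodType) (a b c : W) : a + b + c = 0 -> b = - a - c.
Proof.
move=> H; apply: (addrI a); apply: (addIr c).
by rewrite H addrA subrr sub0r addNr.
Qed.
Close Scope complex_scope.
Unset Implicit Arguments.

Theorem mainTheorem3 (R : realType) (K : completeNormedModType (cplx R))
  (ip kf : K -> K -> cplx R) (s1 s2 gam : 'M[cplx R]_2)
  (Omega : set R) (D : set K) (A Az : K -> K)
  (Cop : R -> K -> 'cV[cplx R]_2) (X : R -> K -> K) (B : R -> 'cV[cplx R]_2 -> K)
  (Xi : R -> K -> K) (lam : cplx R) (Rl : K -> K) (u u' : R -> 'cV[cplx R]_2) :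
  krein_space ip kf ->
  sigma_data s1 s2 gam ->
  open Omega ->
  vessel Omega D A Az Cop X B s1 s2 gam ->
  (forall x, Omega x -> (forall v, X x (Xi x v) = v) /\ (forall v, Xi x (X x v) = v)) ->
  resolvent D A lam Rl ->
  (forall x, Omega x ->
     vderiv u x (u' x) /\ lam *: (s2 *m u x) - s1 *m u' x + gam *m u x = 0) ->
  forall x, Omega x ->
    exists y' : 'cV[cplx R]_2,
      vderiv (fun t => transfer Cop Xi Rl B s1 t (u t)) x y' /\
      lam *: (s2 *m transfer Cop Xi Rl B s1 x (u x)) - s1 *m y'
        + gamma_star Cop Xi B s1 s2 gam x *m transfer Cop Xi Rl B s1 x (u x) = 0.
Proof.
move=> _ [s1U _] Hopen [Hpre Hninv] Hinv [bRl [HRl1 HRl2]] Hu x Ox.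
have [bC [bX [bB [_ [_ [_ [DX Hnd]]]]]]] := (Hpre x).1.
have [_ [HBD [[B' [dB EB']] [[C' [dC EC']] [X' [dX EX']]]]]] := Hpre x.
have [Xi0 [bXi0 [i1 [i2 DXi0]]]] := Hninv x Ox.
have [inv1 inv2] := Hinv x Ox.
have EXi : forall v, Xi x v = Xi0 v by move=> v; rewrite -{1}(i1 v) inv2.
have bT : bounded_op (Xi x) by rewrite (funext EXi).
have DT : forall w, D w -> D (Xi x w) by move=> w Dw; rewrite EXi; exact: DXi0.
have hnear : \forall h \near (0:R)^', forall w, X (x + h) (Xi (x + h) w) = w.
  apply: nbhs_dnbhs.
  have H0 : \forall t \near x, Omega t := open_nbhs_nbhs (conj Hopen Ox).
  move: H0 => /nbhs0P; apply: filterS => h Oh; exact: (Hinv _ Oh).1.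
have [du equ] := Hu x Ox.
have d1 := vderiv_lin (@mulmx_lin _ s1) (@mulmx_cont _ s1) du.
have d2 := vderiv_op dB bB d1.
have d3 := vderiv_lin bRl.1 bRl.2 d2.
have d4 := vderiv_inv dX bT hnear inv1 inv2 d3.
have d5 := vderiv_op dC bC d4.
have d6 := vderivB du d5.
eexists; split; first exact: d6.
rewrite /transfer /gamma_star.
have lC := bC.1; have lT := bT.1; have lB := bB.1; have lR := bRl.1.
set ux := u x.
set e0 := s1 *m ux.
set w0 := Xi x (Rl (B x e0)).
have Dw0 : D w0 := DT _ (HRl1 _).1.
have ARl : forall v, A (Rl v) = lam *: Rl v - v.
  by move=> v; rewrite -[X in _ = _ - X](HRl1 v).2 subKr.
have RlA : forall z, D z -> Rl (A z) = lam *: Rl z - z.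
  move=> z Dz; have := HRl2 z Dz; rewrite (linB lR) (linZ lR) => H.
  by rewrite -[X in _ = _ - X]H subKr.
have EAz : Az w0 = Xi x (- (lam *: Rl (B x e0) - B x e0) - B x (s1 *m Cop x w0)).
  have H := Hnd w0 Dw0; rewrite {1}/w0 inv1 ARl in H.
  by rewrite -[LHS]inv2 (zsolve H).
have EB'' : B' e0 = - (A (B x (s2 *m ux)) + B x (gam *m ux)).
  by rewrite EB' /e0 mulKmx.
have Eu' : s1 *m u' x = lam *: (s2 *m ux) + gam *m ux.
  have := zsolve equ; move/(congr1 (fun z => - z)).
  by rewrite opprK opprD !opprK.
have lg1 : is_linear (fun e => s2 *m Cop x (Xi x (B x (s1 *m e)))).
  apply: lin_comp; first exact: mulmx_lin.
  apply: lin_comp => //; apply: lin_comp => //; apply: lin_comp => //.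
  exact: mulmx_lin.
have lg2 : is_linear (fun e => s1 *m Cop x (Xi x (B x (s2 *m e)))).
  apply: lin_comp; first exact: mulmx_lin.
  apply: lin_comp => //; apply: lin_comp => //; apply: lin_comp => //.
  exact: mulmx_lin.
rewrite mulmxBl mulmxDl (mx_ofE lg1) (mx_ofE lg2).
rewrite (EC' w0 Dw0) EAz Eu' EB'' EX'.
rewrite !(linD lR, linN lR, linZ lR, linB lR).
rewrite (RlA _ (HBD ux)).
rewrite !(linD lB, linN lB, linZ lB, linB lB, linD lR, linN lR, linZ lR, linB lR,
  linD lT, linN lT, linZ lT, linB lT, linD lC, linN lC, linZ lC, linB lC).
rewrite !(mulmxDr, mulmxBr, mulmxN, scalemxAr).
rewrite Eu' !mulmxA mulmxV // mul1mx.
rewrite /w0 /e0 /ux !mul1mx.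
rewrite ?(linD lB, linN lB, linZ lB, linB lB, linD lR, linN lR, linZ lR, linB lR,
  linD lT, linN lT, linZ lT, linB lT, linD lC, linN lC, linZ lC, linB lC,
  mulmxDr, mulmxBr, mulmxN, scalemxAr, scalerBr, scalerDr, scalerN).
apply/matrixP => i j; rewrite !mxE !big_ord_recl !big_ord0 !mxE.
ring.
Qed.
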